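(* Suppose $G\in\mathcal{G}(n,k,p,0)$ has $k$ connected components $C_1,\dots,C_k\subset V=[n]$, each of size $n_0$, with vertex $1\in C_1$. Then the Orthogonal Matching Pursuit algorithm applied to the sparse recovery problem $\arg\min\{\|x\|_0: x\in\mathbb{R}^{n-1},\ L_{-1}x=-\ell_1\}$ returns $x^{\#}=\mathbf{1}_{C_1\setminus\{1\}}$ after $n_0-1$ iterations. Consequently $C_1=\{1\}\cup\mathrm{supp}(x^{\#})$.
   Context: $\mathcal{G}(n,k,p,0)$ is the stochastic block model with $n=kn_0$ vertices partitioned in advance into clusters $C_1,\dots,C_k$ of size $n_0$, each intra-cluster edge present independently with probability $p$ and no inter-cluster edges. $A$ is the adjacency matrix, $D=\mathrm{diag}(d_1,\dots,d_n)$ the degree matrix (degrees assumed positive), $L=I-D^{-1}A$, $\ell_i$ the $i$-th column of $L$, and $L_{-1}$ the matrix $L$ with column $\ell_1$ removed; vectors in $\mathbb{R}^{n-1}$ are indexed by vertices $2,\dots,n$. For $S\subset[n]$, $\mathbf{1}_S$ is the indicator vector of $S$. Orthogonal Matching Pursuit (OMP) with matrix $\Phi$ and vector $y$: set $r^{(0)}=y$, $S^{(0)}=\emptyset$; at iteration $\alpha\ge1$, let $i^{(\alpha)}$ be an index of a largest absolute entry of $\Phi^\top r^{(\alpha-1)}$, $S^{(\alpha)}=S^{(\alpha-1)}\cup\{i^{(\alpha)}\}$, $x^{(\alpha)}=\arg\min\{\|\Phi z-y\|_2:\mathrm{supp}(z)\subset S^{(\alpha)}\}$, $r^{(\alpha)}=y-\Phi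 x^{(\alpha)}$. Here $\Phi=L_{-1}$, $y=-\ell_1$. *)

(* Defs.v *)
From HB Require Import structures.
From mathcomp Require Import all_boot all_order all_algebra.
From mathcomp Require Import reals.
Set Implicit Arguments. Unset Strict Implicit. Unset Printing Implicit Defensive.
Import Order.TTheory GRing.Theory Num.Theory.
Local Open Scope ring_scope.

(* Vertices are 'I_N (0-based): the paper's vertex 1 is ord0.
   Vectors of R^m are column vectors 'cV[R]_m. *)

Definition adjmx (R : realType) (N : nat) (e : rel 'I_N) : 'M[R]_N :=
  \matrix_(i, j) (e i j)%:R.

Definition degree (R : realType) (N : nat) (A : 'M[R]_N) (i : 'I_N) : R :=
  \sum_j A i j.
Definition degmx (R : realType) (N : nat) (A : 'M[R]_N) : 'M[R]_N :=
  diag_mx (\row_i degree A i).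

Definition rwlaplacian (R : realType) (N : nat) (A : 'M[R]_N) : 'M[R]_N :=
  1%:M - invmx (degmx A) *m A.

Definition norm2 (R : realType) (m : nat) (v : 'cV[R]_m) : R :=
  Num.sqrt (\sum_i (v i 0) ^+ 2).

Definition supp (R : realType) (m : nat) (v : 'cV[R]_m) : {set 'I_m} :=
  [set i | v i 0 != 0].

(* A run of Orthogonal Matching Pursuit with matrix Phi and vector y:
   S a = S^(a), idx a = i^(a), x a = x^(a), r a = r^(a).
   Ties in the argmax and in the argmin are resolved arbitrarily
   (any valid choice is allowed). *)
Definition omp_run (R : realType) (m p : nat) (Phi : 'M[R]_(m, p)) (y : 'cV[R]_m)
  (S : nat -> {set 'I_p}) (idx : nat -> 'I_p)
  (x : nat -> 'cV[R]_p) (r : nat -> 'cV[R]_m) : Prop :=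
  [/\ r 0%N = y, S 0%N = set0, x 0%N = 0 &
   forall a : nat,
   [/\ (forall j : 'I_p, `|(Phi^T *m r a) j 0| <= `|(Phi^T *m r a) (idx a.+1) 0|),
       S a.+1 = idx a.+1 |: S a,
       supp (x a.+1) \subset S a.+1,
       (forall z : 'cV[R]_p, supp z \subset S a.+1 ->
          norm2 (Phi *m x a.+1 - y) <= norm2 (Phi *m z - y)) &
       r a.+1 = y - Phi *m x a.+1]].

(* Main.v *)
Require Import Defs.
From HB Require Import structures.
From mathcomp Require Import all_boot all_order all_algebra.
From mathcomp Require Import reals.
From mathcomp Require Import lra ring.
Import Order.TTheory GRing.Theory Num.Theory.
Set Implicit Arguments. Unset Strict Implicit. Unset Printing Implicit Defensive.
Local Open Scope ring_scope.

Definition sqs (R : realType) (m : nat) (v : 'cV[R]_m) : R := \sum_i (v i 0) ^+ 2.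

Lemma sqs_ge0 (R : realType) m (v : 'cV[R]_m) : 0 <= sqs v.
Proof. by apply: sumr_ge0 => i _; rewrite sqr_ge0. Qed.

Lemma sqs_le0 (R : realType) m (v : 'cV[R]_m) : sqs v <= 0 -> v = 0.
Proof.
move=> h.
have h0 : sqs v = 0 by apply/eqP; rewrite eq_le h sqs_ge0.
apply/matrixP => i j; rewrite ord1 mxE.
have := @psumr_eq0P R _ predT (fun i => v i 0 ^+ 2) (fun i _ => sqr_ge0 (v i 0)) h0 i isT.
by move/eqP; rewrite sqrf_eq0 => /eqP.
Qed.

Lemma norm2_le0 (R : realType) m (v : 'cV[R]_m) : norm2 v <= 0 -> v = 0.
Proof.
move=> h; apply: sqs_le0.
have : norm2 v = 0 by apply/eqP; rewrite eq_le h sqrtr_ge0.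
by move/eqP; rewrite /norm2 sqrtr_eq0.
Qed.

Lemma norm2_0 (R : realType) m : norm2 (0 : 'cV[R]_m) = 0.
Proof.
rewrite /norm2 (eq_bigr (fun _ => 0)) ?big1 ?sqrtr0 // => i _.
by rewrite mxE expr0n.
Qed.

Lemma alg_c0 (R : realType) (a c : R) : 0 <= a ->
  (forall t, 0 <= -(2*t)*c + t^+2 * a) -> c = 0.
Proof.
move=> ha H.
have ha1 : a + 1 != 0 by rewrite gt_eqF // ltr_wpDl.
have [t ht] : exists t, t * (a + 1) = c by exists (c / (a + 1)); rewrite divfK.
have := H t; rewrite -ht => H'. nra.
Qed.

Lemma trmx_entry (R : realType) m p (Phi : 'M[R]_(m, p)) (r : 'cV[R]_m) j :
  (Phi^T *m r) j 0 = \sum_i Phi i j * r i 0.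
Proof. by rewrite mxE; apply: eq_bigr => i _; rewrite mxE. Qed.

Lemma ls_orth (R : realType) m p (Phi : 'M[R]_(m, p)) (y : 'cV[R]_m)
  (S : {set 'I_p}) (x : 'cV[R]_p) :
  supp x \subset S ->
  (forall z : 'cV[R]_p, supp z \subset S ->
          norm2 (Phi *m x - y) <= norm2 (Phi *m z - y)) ->
  forall j, j \in S -> (Phi^T *m (y - Phi *m x)) j 0 = 0.
Proof.
move=> hx hmin j hj.
rewrite trmx_entry.
set r := y - Phi *m x.
apply: (@alg_c0 R (\sum_i (Phi i j)^+2) _ (sumr_ge0 _ (fun i _ => sqr_ge0 _))) => t.
have hs : supp (x + t *: delta_mx j 0) \subset S.
  apply/subsetP => i; rewrite inE !mxE.
  case: (eqVneq i j) => [-> //|hij]; rewrite ?andTb ?andbT mulr0 addr0 => hxi.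
  by apply: (subsetP hx); rewrite inE.
have := hmin _ hs.
rewrite mulmxDr -scalemxAr -colE.
have -> : Phi *m x + t *: col j Phi - y = t *: col j Phi - r.
  by rewrite /r opprB addrAC addrC.
have -> : Phi *m x - y = - r by rewrite /r opprB.
rewrite /norm2 ler_sqrt; last by apply: sumr_ge0 => i _; apply: sqr_ge0.
have -> : \sum_i ((t *: col j Phi - r) i 0) ^+ 2 =
   \sum_i ((- r) i 0) ^+ 2 + (- (2 * t) * \sum_i Phi i j * r i 0 + t ^+ 2 * \sum_i Phi i j ^+ 2).
  rewrite !mulr_sumr -!big_split /=; apply: eq_bigr => i _; rewrite !mxE; ring.
by rewrite lerDl.
Qed.

Lemma resid_zero (R : realType) m p (Phi : 'M[R]_(m, p)) (u : 'cV[R]_p) :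
  (forall j, u j 0 * (Phi^T *m (Phi *m u)) j 0 = 0) -> Phi *m u = 0.
Proof.
move=> h; apply: sqs_le0.
have -> : sqs (Phi *m u) = ((Phi *m u)^T *m (Phi *m u)) 0 0.
  by rewrite /sqs [RHS]mxE; apply: eq_bigr => i _; rewrite [in RHS]mxE expr2.
rewrite trmx_mul -mulmxA mxE big1 // => j _.
by rewrite mxE h.
Qed.

Section Graph.
Variables (R : realType) (n : nat) (e : rel 'I_n.+1) (C1 : {set 'I_n.+1}).
Hypothesis hsym : symmetric e.
Hypothesis hside : forall u v, e u v -> (u \in C1) = (v \in C1).
Hypothesis hconn : forall u v, u \in C1 -> v \in C1 -> connect e u v.
Hypothesis hdeg : forall v, 0 < degree (adjmx R e) v.
Hypothesis h0 : ord0 \in C1.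

Local Notation A := (adjmx R e).
Local Notation L := (rwlaplacian (adjmx R e)).
Local Notation Phi := (col' ord0 L).
Local Notation d := (degree (adjmx R e)).

Lemma invD : invmx (degmx A) = diag_mx (\row_i (d i)^-1).
Proof.
have h1 : degmx A *m diag_mx (\row_i (d i)^-1) = 1%:M.
  rewrite /degmx mulmx_diag -diag_const_mx; congr diag_mx.
  apply/rowP => i; rewrite !mxE divff //; exact: lt0r_neq0.
have [hu _] := mulmx1_unit h1.
by rewrite -[RHS]mul1mx -(mulVmx hu) -mulmxA h1 mulmx1.
Qed.

Lemma Lentry v w : L v w = (v == w)%:R - (d v)^-1 * (e v w)%:R.
Proof. by rewrite /rwlaplacian invD mul_diag_mx !mxE. Qed.

Lemma Lzero v w : (v \in C1) != (w \in C1) -> L v w = 0.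
Proof.
move=> h.
have vw : v != w by apply: contraNneq h => ->.
have nev : ~~ e v w by apply: contraNN h => /hside ->.
by rewrite Lentry (negbTE vw) (negbTE nev) mulr0 subr0.
Qed.

Lemma deg_sum v : d v = \sum_u (e v u)%:R.
Proof. by rewrite /degree; apply: eq_bigr => u _; rewrite mxE. Qed.

Lemma Lw_row (w : 'cV[R]_n.+1) v :
  (L *m w) v 0 = w v 0 - (d v)^-1 * \sum_u (e v u)%:R * w u 0.
Proof.
rewrite /rwlaplacian mulmxBl mul1mx invD mul_diag_mx !mxE mulr_sumr.
congr (_ - _); apply: eq_bigr => u _; rewrite !mxE mulrA //.
Qed.

Lemma harm_closed (w : 'cV[R]_n.+1) : L *m w = 0 ->
  forall x, (forall u, w u 0 <= w x 0) -> forall y, e x y -> w y 0 = w x 0.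
Proof.
move=> hL x hx y hxy.
have hr := Lw_row w x; rewrite hL mxE in hr.
have hd : d x != 0 by exact: lt0r_neq0.
have hs : \sum_u (e x u)%:R * w u 0 = d x * w x 0.
  apply: (mulfI (invr_neq0 hd)); rewrite mulrA mulVf // mul1r.
  by apply/eqP; rewrite eq_sym -subr_eq0 -hr.
have hz : \sum_u (e x u)%:R * (w x 0 - w u 0) = 0.
  under eq_bigr do rewrite mulrBr.
  by rewrite sumrB hs -mulr_suml -deg_sum mulrC subrr.
have hF : forall u, predT u -> 0 <= (e x u)%:R * (w x 0 - w u 0).
  by move=> u _; rewrite mulr_ge0 ?ler0n // subr_ge0.
have := @psumr_eq0P R _ predT (fun u => (e x u)%:R * (w x 0 - w u 0)) hF hz y isT.
by rewrite hxy mul1r => /eqP; rewrite subr_eq0 => /eqP <-.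
Qed.

Lemma harm_le0 (w : 'cV[R]_n.+1) : L *m w = 0 -> w ord0 0 = 0 ->
  (forall v, v \notin C1 -> w v 0 = 0) -> forall u, w u 0 <= 0.
Proof.
move=> hL hw0 hout.
case: (@arg_maxP _ R _ ord0 predT (fun i => w i 0) isT) => v _ hv.
have hv' : forall u, w u 0 <= w v 0 by move=> u; exact: hv.
have hcl : closed e [pred u | w u 0 == w v 0].
  move=> a b hab; rewrite !inE; apply/eqP/eqP => ha.
    by rewrite (@harm_closed w hL a _ b hab) // ha.
  by rewrite (@harm_closed w hL b _ a _) // ?ha // hsym.
have hc : forall u, connect e v u -> w u 0 = w v 0.
  by move=> u hu; apply/eqP; rewrite -[_ == _]/(u \in [pred u | w u 0 == w v 0]) -(closed_connect hcl hu) inE.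
have hM : w v 0 = 0.
  case hvC : (v \in C1); last by apply: hout; rewrite hvC.
  by rewrite -(hc ord0 (hconn hvC h0)).
by move=> u; rewrite -hM.
Qed.

Lemma harm_zero (w : 'cV[R]_n.+1) : L *m w = 0 -> w ord0 0 = 0 ->
  (forall v, v \notin C1 -> w v 0 = 0) -> w = 0.
Proof.
move=> hL hw0 hout.
have h1 := harm_le0 hL hw0 hout.
have h2 := @harm_le0 (- w).
have : L *m (- w) = 0 by rewrite mulmxN hL oppr0.
move=> /h2 {}h2.
have {}h2 : forall u, (- w) u 0 <= 0.
  apply: h2; first by rewrite mxE hw0 oppr0.
  by move=> v hv; rewrite mxE hout // oppr0.
apply/matrixP => u j; rewrite ord1 mxE; apply/eqP; rewrite eq_le h1 /=.
by have := h2 u; rewrite mxE oppr_le0.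
Qed.

Definition ext (u : 'cV[R]_n) : 'cV[R]_n.+1 :=
  \col_v (if unlift ord0 v is Some j then u j 0 else 0).

Lemma Phi_ext (u : 'cV[R]_n) : Phi *m u = L *m ext u.
Proof.
apply/matrixP => i k; rewrite ord1 !mxE big_ord_recl /= /ext mxE unlift_none mulr0 add0r.
by apply: eq_bigr => j _; rewrite !mxE liftK.
Qed.

Definition C1' : {set 'I_n} := [set j | lift ord0 j \in C1].

Lemma Phi_inj (u : 'cV[R]_n) : (forall j, j \notin C1' -> u j 0 = 0) -> Phi *m u = 0 -> u = 0.
Proof.
move=> hu hP.
have he : ext u = 0.
  apply: harm_zero; first by rewrite -Phi_ext.
    by rewrite mxE unlift_none.
  move=> v hv; rewrite mxE; case: unliftP => [j hj|//].
  by apply: hu; rewrite inE -hj.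
apply/matrixP => j k; rewrite ord1.
have := congr1 (fun M : 'cV[R]_n.+1 => M (lift ord0 j) 0) he; rewrite /= /ext !mxE liftK => ->.
by rewrite ?mxE.
Qed.

Definition c1 : 'cV[R]_n.+1 := \col_v ((v \in C1)%:R).

Lemma L_C1 : L *m c1 = 0.
Proof.
apply/matrixP => v k; rewrite ord1 Lw_row [RHS]mxE.
case hv : (v \in C1).
  have -> : \sum_u (e v u)%:R * c1 u 0 = d v.
    rewrite deg_sum; apply: eq_bigr => u _; rewrite mxE.
    case: (boolP (e v u)) => h; first by rewrite -(hside h) hv mulr1.
    by rewrite mul0r.
  by rewrite mxE hv mulVf ?subrr //; exact: lt0r_neq0.
rewrite big1 ?mulr0 ?mxE ?hv ?subr0 // => u _.
case: (boolP (e v u)) => h; last by rewrite mul0r.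
by rewrite mxE -(hside h) hv mulr0.
Qed.

Definition one' : 'cV[R]_n := \col_j ((lift ord0 j \in C1)%:R).

Lemma Phi_one : Phi *m one' = - col ord0 L.
Proof.
apply/matrixP => v k; rewrite ord1.
have H := congr1 (fun M : 'cV[R]_n.+1 => M v 0) L_C1.
have hc : forall w, c1 w 0 = (w \in C1)%:R by move=> w; rewrite mxE.
move: H; rewrite /= mxE big_ord_recl /= !hc h0 mulr1 [X in _ = X]mxE.
move/eqP; rewrite addr_eq0 => /eqP H.
have -> : (- col ord0 L) v 0 = - L v ord0 by rewrite mxE [X in - X]mxE.
rewrite H opprK mxE.
have hP : forall j, Phi v j = L v (lift ord0 j) by move=> j; rewrite mxE.
have ho : forall j, one' j 0 = (lift ord0 j \in C1)%:R by move=> j; rewrite mxE.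
by apply: eq_bigr => j _; rewrite hP ho hc.
Qed.

Lemma res_out (u : 'cV[R]_n) : (forall j, j \notin C1' -> u j 0 = 0) ->
  forall j, j \notin C1' -> (Phi^T *m (Phi *m u)) j 0 = 0.
Proof.
move=> hu j hj.
have hr : forall v, v \notin C1 -> (Phi *m u) v 0 = 0.
  move=> v hv; rewrite mxE big1 // => k _; rewrite mxE.
  case hk : (lift ord0 k \in C1).
    by rewrite Lzero ?mul0r // (negbTE hv) hk.
  by rewrite hu ?mulr0 // inE hk.
rewrite trmx_entry big1 // => v _; rewrite mxE.
case hv : (v \in C1).
  by rewrite Lzero ?mul0r //; move: hj; rewrite inE hv => ->.
by rewrite hr ?mulr0 // hv.
Qed.

End Graph.

Lemma lift_C1' n (C : {set 'I_n.+1}) :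
  [set lift ord0 j | j in C1' C] = C :\ ord0.
Proof.
apply/setP => v; rewrite !inE.
case: (unliftP ord0 v) => [j ->|->].
  by rewrite mem_imset; [rewrite inE eq_sym neq_lift | exact: lift_inj].
rewrite eqxx /=; apply/imsetP => [[j _ h]].
by move: (neq_lift ord0 j); rewrite -h eqxx.
Qed.

Lemma card_C1' n (C : {set 'I_n.+1}) : ord0 \in C -> #|C1' C| = #|C|.-1.
Proof.
move=> h0; rewrite (cardsD1 ord0 C) h0 -lift_C1' card_imset //; exact: lift_inj.
Qed.

Lemma supp_one' (R : realType) n (C : {set 'I_n.+1}) : supp (one' R C) = C1' C.
Proof.
apply/setP => j; rewrite !inE mxE.
by case: (_ \in _); rewrite ?oner_eq0 ?eqxx.
Qed.


Set Strict Implicit. Unset Implicit Arguments.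

Theorem mainTheorem2 (R : realType) (n n0 k : nat)
  (C : 'I_k -> {set 'I_n.+1}) (i1 : 'I_k) (e : rel 'I_n.+1)
  (hn : n.+1 = (k * n0)%N)
  (hsize : forall i, #|C i| = n0)
  (hdisj : forall i j, i != j -> [disjoint C i & C j])
  (hcover : forall v, exists i, v \in C i)
  (hsym : symmetric e) (hirr : irreflexive e)
  (hintra : forall u v, e u v -> exists i, (u \in C i) && (v \in C i))
  (hcomp : forall u v, connect e u v <-> exists i, (u \in C i) && (v \in C i))
  (h1 : ord0 \in C i1)
  (hdeg : forall v, 0 < degree (adjmx R e) v)
  (S : nat -> {set 'I_n}) (idx : nat -> 'I_n)
  (x : nat -> 'cV[R]_n) (r : nat -> 'cV[R]_n.+1)
  (hrun : omp_run (col' ord0 (rwlaplacian (adjmx R e)))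
                  (- col ord0 (rwlaplacian (adjmx R e))) S idx x r) :
  x (n0.-1) = \col_j ((lift ord0 j \in C i1)%:R) /\
  C i1 = ord0 |: [set lift ord0 j | j in supp (x (n0.-1))].
Proof.
have hside : forall u v, e u v -> (u \in C i1) = (v \in C i1).
  move=> u v huv; have [i /andP[hu hv]] := hintra u v huv.
  case: (eqVneq i i1) => [<-|hne]; first by rewrite hu hv.
  by rewrite (disjointFr (hdisj _ _ hne) hu) (disjointFr (hdisj _ _ hne) hv).
have hconn : forall u v, u \in C i1 -> v \in C i1 -> connect e u v.
  by move=> u v hu hv; apply/hcomp; exists i1; rewrite hu hv.
set Phi := col' ord0 (rwlaplacian (adjmx R e)).
set y := - col ord0 (rwlaplacian (adjmx R e)).
set C' := C1' (C i1).
set o := one' R (C i1).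
have hPo : Phi *m o = y := Phi_one hside hdeg h1.
have hinj := Phi_inj hsym hconn hdeg h1.
have hout := res_out hside hdeg.
have hcard : #|C'| = n0.-1 by rewrite /C' card_C1' // hsize.
have ho_supp : forall j, j \notin C' -> o j 0 = 0.
  by move=> j; rewrite /o /C' inE mxE => /negbTE ->.
have ho_in : forall j, j \in C' -> o j 0 = 1.
  by move=> j; rewrite /o /C' inE mxE => ->.
have hsub : forall (A B : 'cV[R]_n) j, (A - B) j 0 = A j 0 - B j 0.
  by move=> A B j; rewrite !mxE.
case: hrun => hr0 hS0 hx0 hstep.
have orth : forall b j, j \in S b.+1 -> (Phi^T *m r b.+1) j 0 = 0.
  by move=> b j hj; have [_ _ hs hm hr'] := hstep b; rewrite hr'; exact: ls_orth hs hm j hj.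
have key : forall a, (a <= n0.-1)%N -> [/\ S a \subset C', #|S a| = a,
    (forall j, j \notin S a -> x a j 0 = 0) & r a = y - Phi *m x a].
  elim => [_|a IH ha].
    rewrite hS0 sub0set cards0 hx0 mulmx0 subr0; split => // j _; by rewrite mxE.
  have [hSa hca hxa hra] := IH (ltnW ha).
  have [hmax hSS hsupp hmin hrr] := hstep a.
  set u := o - x a.
  have hu : forall j, j \notin C' -> u j 0 = 0.
    move=> j hj; rewrite /u hsub ho_supp // hxa ?subr0 //.
    by apply: contra hj; apply: (subsetP hSa).
  have hru : r a = Phi *m u by rewrite hra /u mulmxBr hPo.
  have hrne : r a != 0.
    apply/eqP => h0r.
    have hu0 : u = 0 by apply: hinj hu _; rewrite -hru.
    have : C' \subset S a.
      apply/subsetP => j hj; apply: contraT => hjn.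
      have := congr1 (fun M : 'cV[R]_n => M j 0) hu0.
      by rewrite /= /u hsub ho_in // hxa // subr0 mxE => /eqP; rewrite oner_eq0.
    move/subset_leq_card; rewrite hcard hca => hle.
    by rewrite leqNgt ha in hle.
  set c := Phi^T *m r a.
  have [j hjC hcj] : exists2 j, j \in C' & c j 0 != 0.
    case: (boolP [exists j, u j 0 * c j 0 != 0]).
      move/existsP => [j hj]; exists j.
        case hjC : (j \in C') => //.
        by rewrite hu ?hjC // mul0r eqxx in hj.
      by apply: contraNneq hj => ->; rewrite mulr0.
    move/existsPn => hall; exfalso; apply: (negP hrne).
    rewrite hru; apply/eqP; apply: resid_zero => k0.
    by apply/eqP; have := hall k0; rewrite /c hru negbK.
  have hidx : c (idx a.+1) 0 != 0.
    by rewrite -normr_gt0; apply: lt_le_trans (hmax j); rewrite normr_gt0.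
  have hiC : idx a.+1 \in C'.
    apply: contraR hidx => hn'; rewrite /c hru; apply/eqP; exact: hout _ hu _ hn'.
  have hiS : idx a.+1 \notin S a.
    apply/negP => hin; move: hidx hin; rewrite /c.
    case: (a) => [|b]; first by rewrite hS0 inE.
    by move=> hne /orth hz; rewrite hz eqxx in hne.
  split.
  - rewrite hSS; apply/subsetP => v; rewrite in_setU1 => /orP [/eqP -> //| /(subsetP hSa)//].
  - by rewrite hSS cardsU1 hiS hca.
  - move=> j' hj'; apply/eqP; apply: contraNT hj' => hx.
    by apply: (subsetP hsupp); rewrite inE.
  - exact: hrr.
have hxf : x n0.-1 = o.
  case hm : n0.-1 => [|b].
    have hC0 : C' = set0 by apply: cards0_eq; rewrite hcard hm.
    by rewrite hx0; apply/matrixP => j k0; rewrite ord1 mxE ho_supp // hC0 inE.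
  have hb : (b.+1 <= n0.-1)%N by rewrite hm.
  have [hSa hca hxa hra] := key b.+1 hb.
  have [_ _ hs hmin _] := hstep b.
  have hSC : S b.+1 = C' by apply/eqP; rewrite eqEcard hSa hca hcard hm leqnn.
  have hz : norm2 (Phi *m x b.+1 - y) <= norm2 (Phi *m o - y).
    apply: hmin; apply/subsetP => j; rewrite inE hSC.
    by case hj : (j \in C') => //; rewrite ho_supp ?hj ?eqxx.
  rewrite hPo subrr norm2_0 in hz.
  have := norm2_le0 hz; rewrite -hPo -mulmxBr => /(hinj _) hd.
  apply/eqP; rewrite -subr_eq0; apply/eqP; apply: hd => j hj.
  by rewrite hsub hxa ?hSC // ho_supp // subrr.
rewrite hxf; split; first by [].
by rewrite supp_one' lift_C1' setD1K.
Qed.
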